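(* Let $c\in\mathbb{N}$ and let $F$ be a double-fan on at least $8c^2+2c+1$ vertices, with centres $v_1,v_2$. Let $\mathcal{P},\mathcal{Q}$ be partitions of $F$ such that $\mathcal{P}$ is a tree-partition and $|P\cap Q|\leq c$ for all $P\in\mathcal{P}$ and $Q\in\mathcal{Q}$. For a vertex $v_i$, let $P_i$ and $Q_i$ denote the parts of $\mathcal{P}$ and $\mathcal{Q}$ containing $v_i$. If $P_1\neq P_2$ and $Q_1\neq Q_2$, then there exist vertices $v_3,v_4$ of $F$ such that $\{v_1,v_2,v_3,v_4\}$ is a $4$-clique in $F$ and $Q_1,Q_2,Q_3,Q_4$ are pairwise distinct.
   Context: All graphs are finite, simple and undirected. A partition $\mathcal{P}$ of a graph $G$ is a partition of $V(G)$ into parts. The quotient $G/\mathcal{P}$ is the graph whose vertices are the non-empty parts of $\mathcal{P}$, where distinct parts $P_1,P_2$ are adjacent iff some $v_1\in P_1$ and $v_2\in P_2$ satisfy $v_1v_2\in E(G)$. $\mathcal{P}$ is a tree-partition if $G/\mathcal{P}$ is isomorphic to a subgraph of a tree. A vertex is dominant if it is adjacent to every other vertex. A graph $F$ is a double-fan if it has two dominant vertices $v$ and $w$, called the centres, such that $F-v-w$ is a path. *)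

(* Defs.v *)
From mathcomp Require Import all_boot.
Set Implicit Arguments. Unset Strict Implicit. Unset Printing Implicit Defensive.

Definition simple_graph (T : finType) (e : rel T) : Prop :=
  symmetric e /\ irreflexive e.

Definition is_tree (U : finType) (t : rel U) : Prop :=
  simple_graph t /\
  (forall x y : U, connect t x y) /\
  (forall s : seq U, uniq s -> 3 <= size s -> ~~ cycle t s).

Definition is_partition (T : finType) (P : {set {set T}}) : Prop :=
  partition P [set: T].

Definition quot_adj (T : finType) (e : rel T) (P1 P2 : {set T}) : Prop :=
  P1 != P2 /\ exists v1 v2, [/\ v1 \in P1, v2 \in P2 & e v1 v2].

(* P is a tree-partition: G/P is isomorphic to a subgraph of a tree, i.e. there
   is a tree (U,t) and an injective map of the parts into U sending quotient
   edges to tree edges. *)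
Definition tree_partition (T : finType) (e : rel T) (P : {set {set T}}) : Prop :=
  is_partition P /\
  exists (U : finType) (t : rel U), is_tree t /\
    exists f : {set T} -> U,
      {in P &, injective f} /\
      (forall P1 P2, P1 \in P -> P2 \in P -> quot_adj e P1 P2 -> t (f P1) (f P2)).

Definition dominant (T : finType) (e : rel T) (v : T) : Prop :=
  forall x, x != v -> e v x.

(* G - v - w is a path: its vertices can be listed without repetition as
   x_0, ..., x_(m-1) with x_i ~ x_j iff |i - j| = 1. *)
Definition minus2_is_path (T : finType) (e : rel T) (v w : T) : Prop :=
  exists s : seq T,
    [/\ uniq s,
        (forall x, (x \in s) = (x != v) && (x != w)) &
        (forall i j, i < size s -> j < size s ->
           e (nth v s i) (nth v s j) = ((i == j.+1) || (j == i.+1)))].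

Definition double_fan (T : finType) (e : rel T) (v w : T) : Prop :=
  [/\ simple_graph e, v != w, dominant e v, dominant e w & minus2_is_path e v w].

(* Main.v *)
Require Import Defs.
From mathcomp Require Import all_boot.
From mathcomp Require Import zify.
Set Implicit Arguments. Unset Strict Implicit.
Fixpoint rr (g : nat -> bool) (n : nat) : nat :=
  if n is n'.+1 then (if g n' then 0 else (rr g n').+1) else 0.

Lemma count_iotaS (p : pred nat) n :
  count p (iota 0 n.+1) = count p (iota 0 n) + p n.
Proof. by rewrite -addn1 iotaD count_cat /= addn0. Qed.

Lemma count_iota_mono (p : pred nat) n n' :
  n' <= n -> count p (iota 0 n') <= count p (iota 0 n).
Proof.
move=> h; rewrite -(subnKC h) iotaD count_cat; exact: leq_addr.
Qed.

Lemma runs (X : eqType) (g : nat -> bool) (q : nat -> X) (k n : nat) :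
  (forall i, i.+1 < n -> ~~ g i -> ~~ g i.+1 -> q i = q i.+1) ->
  (forall j, j < n -> count (fun i => ~~ g i && (q i == q j)) (iota 0 n) <= k) ->
  n <= count g (iota 0 n) + (count g (iota 0 n)).+1 * k.
Proof.
move=> Hq Hk.
pose C n' L := count (fun i => ~~ g i && (q i == L)) (iota 0 n').
have rk : forall n', n' <= n -> rr g n' <= C n' (q n'.-1) -> rr g n' <= k.
  move=> n' hn' hr; case: n' hn' hr => [|n'] hn' hr //=.
  apply: leq_trans hr _; apply: leq_trans (Hk n' hn').
  exact: count_iota_mono.
have main : forall n', n' <= n ->
   n' <= count g (iota 0 n') * k.+1 + rr g n' /\ rr g n' <= C n' (q n'.-1).
  elim=> [|n' IH] hn; first by [].
  have [IH1 IH2] := IH (ltnW hn).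
  have hk := rk n' (ltnW hn) IH2.
  rewrite /C !count_iotaS /=.
  case hg: (g n') => /=.
    split; last by [].
    rewrite addn0 /=; lia.
  split; first lia.
  rewrite eqxx addn1 ltnS.
  case: n' IH1 IH2 hk hn hg {IH} => [|n'] IH1 IH2 hk hn hg //=.
  move: IH2; rewrite /=; case hg': (g n') => //= IH2.
  rewrite -(Hq n') //; last by rewrite hg.
  by rewrite hg'.
have [h1 _] := main n (leqnn n).
have := rk n (leqnn n) (proj2 (main n (leqnn n))).
move: h1; set B := count g _; set r := rr g n => h1 h2.
rewrite mulSn; lia.
Qed.

Lemma partition_cover (T : finType) (P : {set {set T}}) x :
  is_partition P -> x \in pblock P x /\ pblock P x \in P.
Proof.
move=> /and3P [/eqP hc _ _].
have hx : x \in cover P by rewrite hc inE.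
by rewrite mem_pblock hx pblock_mem.
Qed.

Lemma tree_two (T : finType) (e : rel T) (v1 v2 : T) (P : {set {set T}}) x :
  double_fan e v1 v2 -> tree_partition e P -> pblock P v1 != pblock P v2 ->
  (pblock P x == pblock P v1) || (pblock P x == pblock P v2).
Proof.
move=> [[esym eirr] hv dv1 dv2 _] [hP [U [t [[_ [_ acyc]] [f [finj fadj]]]]]] hne.
apply/negPn/negP => /norP [h1 h2].
have [hx1 hxP] := partition_cover x hP.
have [hv1 hP1] := partition_cover v1 hP.
have [hv2 hP2] := partition_cover v2 hP.
have xv1 : x != v1 by apply: contraNneq h1 => ->.
have xv2 : x != v2 by apply: contraNneq h2 => ->.
have a12 : t (f (pblock P v1)) (f (pblock P v2)).
  apply: fadj => //; split => //; exists v1, v2; split => //; apply: dv1; by rewrite eq_sym.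
have a2x : t (f (pblock P v2)) (f (pblock P x)).
  apply: fadj => //; split; first by rewrite eq_sym.
  by exists v2, x; split => //; apply: dv2.
have ax1 : t (f (pblock P x)) (f (pblock P v1)).
  apply: fadj => //; split => //.
  by exists x, v1; split => //; rewrite esym; apply: dv1.
have ninj : forall A B, A \in P -> B \in P -> A != B -> f A != f B.
  by move=> A B hA hB; apply: contra => /eqP /finj -> //.
have hu : uniq [:: f (pblock P v1); f (pblock P v2); f (pblock P x)].
  rewrite /= !inE !negb_or !ninj //; by rewrite eq_sym.
have := acyc _ hu isT; rewrite /= a12 a2x ax1; by [].
Qed.

Theorem lemma4p3 (c : nat) (T : finType) (e : rel T) (v1 v2 : T)
    (P Q : {set {set T}}) :
  double_fan e v1 v2 ->
  8 * c ^ 2 + 2 * c + 1 <= #|T| ->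
  tree_partition e P ->
  is_partition Q ->
  (forall A B, A \in P -> B \in Q -> #|A :&: B| <= c) ->
  pblock P v1 != pblock P v2 ->
  pblock Q v1 != pblock Q v2 ->
  exists v3 v4 : T,
    [&& e v1 v2, e v1 v3, e v1 v4, e v2 v3, e v2 v4 & e v3 v4] /\
        [&& pblock Q v1 != pblock Q v2, pblock Q v1 != pblock Q v3,
            pblock Q v1 != pblock Q v4, pblock Q v2 != pblock Q v3,
            pblock Q v2 != pblock Q v4 & pblock Q v3 != pblock Q v4].
Proof.
move=> hF hT hP hQ hPQ hP12 hQ12.
have [[esym eirr] hv dv1 dv2 [s [us hs hpath]]] := hF.
pose m := size s.
pose x i := nth v1 s i.
pose q i := pblock Q (x i).
pose Q1 := pblock Q v1. pose Q2 := pblock Q v2.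
pose g i := (q i == Q1) || (q i == Q2).
have xs : forall i, i < m -> x i != v1 /\ x i != v2.
  move=> i hi; have := mem_nth v1 hi; rewrite hs => /andP [] //.
have ev1 : forall y, y != v1 -> e v1 y by [].
have e12 : e v1 v2 by apply: dv1; rewrite eq_sym.
case: (boolP (has (fun i => [&& i.+1 < m, ~~ g i, ~~ g i.+1 & q i != q i.+1]) (iota 0 m))).
  move=> /hasP [i _ /and4P [hi hgi hgi1 hqi]].
  have [a1 a2] := xs i (ltnW hi).
  have [b1 b2] := xs i.+1 hi.
  exists (x i), (x i.+1); split.
    rewrite e12 !dv1 // !dv2 //= /x hpath ?eqxx ?orbT //; exact: ltnW.
  move: hgi hgi1; rewrite /g !negb_or => /andP [c1 c2] /andP [d1 d2].
  rewrite hQ12 /= eq_sym c1 /= eq_sym d1 /= eq_sym c2 /= eq_sym d2 /=.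
  exact: hqi.
move=> hno; exfalso.
(* every vertex in P1 or P2 *)
have PQc : forall L, L \in Q -> #|L| <= 2 * c.
  move=> L hL.
  have [_ hP1] := partition_cover v1 (proj1 hP).
  have [_ hP2] := partition_cover v2 (proj1 hP).
  have -> : L = L :&: pblock P v1 :|: L :&: pblock P v2.
    rewrite -setIUr; apply/setP => y; rewrite !inE.
    have [hy _] := partition_cover y (proj1 hP).
    case: (y \in L) => //=.
    by case/orP: (tree_two y hF hP hP12) => /eqP <-; rewrite hy ?orbT.
  apply: leq_trans (leq_card_setU _ _) _.
  rewrite mul2n -addnn leq_add // setIC hPQ //.
have hrun := runs (g := g) (q := q) (k := 2 * c) (n := m).
have hB : count g (iota 0 m) + 2 <= #|Q1 :|: Q2|.
  have [hv1 _] := partition_cover v1 hQ.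
  have [hv2 _] := partition_cover v2 hQ.
  rewrite (cardsD1 v1) (cardsD1 v2 (_ :\ v1)) !inE hv1 eq_sym hv hv2 orbT /=.
  rewrite add1n add1n addn2.
  rewrite -size_filter ltnS ltnS cardE.
  rewrite -(size_map x); apply: uniq_leq_size.
    rewrite map_inj_in_uniq ?filter_uniq ?iota_uniq //.
    move=> i j; rewrite !mem_filter !mem_iota /= => /andP [_ hi] /andP [_ hj] /eqP.
    by rewrite /x nth_uniq // => /eqP.
  move=> y /mapP [i]; rewrite mem_filter mem_iota /= => /andP [hg hi] ->.
  have [a1 a2] := xs i hi.
  rewrite mem_enum !inE a1 a2 /=.
  have [hy _] := partition_cover (x i) hQ.
  by case/orP: hg => /eqP hq; rewrite -hq /q hy ?orbT.
have hm : #|T| <= m + 2.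
  rewrite -cardsT (cardsD1 v1) (cardsD1 v2 (_ :\ v1)).
  have : #|[set: T] :\ v1 :\ v2| <= m.
    apply: leq_trans (card_size s); apply: subset_leq_card; apply/subsetP => y.
    by rewrite !inE hs => /andP [-> ->].
  rewrite !inE eq_sym hv /=; lia.
have hU : #|Q1 :|: Q2| <= 4 * c.
  apply: leq_trans (leq_card_setU _ _) _.
  have [_ h1] := partition_cover v1 hQ.
  have [_ h2] := partition_cover v2 hQ.
  have := PQc _ h1; have := PQc _ h2; rewrite /Q1 /Q2; lia.
have hr : m <= count g (iota 0 m) + (count g (iota 0 m)).+1 * (2 * c).
  apply: hrun.
    move=> i hi hgi hgi1; apply/eqP; apply: contraNT hno => hq.
    apply/hasP; exists i; first by rewrite mem_iota /= ltnW.
    by rewrite hi hgi hgi1.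
  move=> j hj.
  have [_ hL] := partition_cover (x j) hQ.
  apply: leq_trans (PQc _ hL).
  rewrite -size_filter -(size_map x) cardE; apply: uniq_leq_size.
    rewrite map_inj_in_uniq ?filter_uniq ?iota_uniq //.
    move=> i k; rewrite !mem_filter !mem_iota /= => /andP [_ hi] /andP [_ hk] /eqP.
    by rewrite /x nth_uniq // => /eqP.
  move=> y /mapP [i]; rewrite mem_filter mem_iota /= => /andP [/andP [_ hq] hi] ->.
  have [hy _] := partition_cover (x i) hQ.
  by rewrite mem_enum; move: hq; rewrite /q => /eqP <-.
move: hr hB hm hU hT; set B := count g _; set U := #|_ :|: _|.
move=> hr hB hm hU hT.
have : B * (2 * c).+1 <= (4 * c - 2) * (2 * c).+1 by apply: leq_mul => //; lia.
rewrite mulSn in hr; nia.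
Qed.
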